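(* Let $\mathbb{R} = A \cup B$ be a partition of $\mathbb{R}$ into two disjoint sets $A$ and $B$, each viewed as a suborder of $(\mathbb{R},<)$. Then there is an open interval $I = (a,b)$, with $-\infty \le a < b \le \infty$, such that $A \cap I$ is not order-isomorphic to $B \cap I$. Equivalently, $\mathbb{R}$ cannot be partitioned into two everywhere isomorphic sets.
   Context: Two disjoint sets $A, B \subseteq \mathbb{R}$ are called everywhere isomorphic if for every open interval $I=(a,b)$ with $-\infty\le a<b\le\infty$ (so $a=-\infty$, $b=\infty$ are allowed), the suborders $A\cap I$ and $B\cap I$ of $(\mathbb{R},<)$ are order-isomorphic. *)

(* Defs.v *)
From Stdlib Require Import Reals.
Open Scope R_scope.

(* Extended endpoints: None below means -oo, None above means +oo. *)
Definition lower_ok (a : option R) (x : R) : Prop :=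
  match a with None => True | Some a' => a' < x end.
Definition upper_ok (b : option R) (x : R) : Prop :=
  match b with None => True | Some b' => x < b' end.

Definition ext_lt (a b : option R) : Prop :=
  match a, b with Some a', Some b' => a' < b' | _, _ => True end.

Definition ext_open_interval (a b : option R) (x : R) : Prop :=
  lower_ok a x /\ upper_ok b x.

Definition order_isomorphic (X Y : R -> Prop) : Prop :=
  exists (f : {x : R | X x} -> {y : R | Y y}) (g : {y : R | Y y} -> {x : R | X x}),
    (forall x, g (f x) = x) /\ (forall y, f (g y) = y) /\
    (forall x1 x2, proj1_sig x1 < proj1_sig x2 <-> proj1_sig (f x1) < proj1_sig (f x2)).

Definition everywhere_isomorphic (A B : R -> Prop) : Prop :=
  (forall x, ~ (A x /\ B x)) /\
  forall a b : option R, ext_lt a b ->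
    order_isomorphic (fun x => A x /\ ext_open_interval a b x)
                     (fun x => B x /\ ext_open_interval a b x).

(* Main.v *)
Require Import Defs.
From Stdlib Require Import Reals Lra Classical ClassicalEpsilon ProofIrrelevance.
Open Scope R_scope.

Local Notation EI := ext_open_interval.

Definition dens (P : R -> Prop) := forall u v, u < v -> exists x, P x /\ u < x /\ x < v.

Definition SW (P Q : R -> Prop) (I : R -> Prop) (F : R -> R) :=
  (forall x, I x -> I (F x)) /\ (forall x y, I x -> I y -> x < y -> F x < F y) /\
  (forall x, I x -> P x -> Q (F x)) /\ (forall x, I x -> Q x -> P (F x)).

Lemma SW_sym P Q I F : SW P Q I F -> SW Q P I F.
Proof. unfold SW; tauto. Qed.

Lemma ei_conv a b x y t : EI a b x -> EI a b y -> x <= t -> t <= y -> EI a b t.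
Proof. destruct a, b; unfold ext_open_interval, lower_ok, upper_ok in *; simpl in *; intuition lra. Qed.

Lemma ei_below a b x : EI a b x -> exists u, EI a b u /\ u < x.
Proof.
  intro H. destruct a as [a'|]; [exists ((a'+x)/2) | exists (x-1)];
  destruct b; unfold ext_open_interval, lower_ok, upper_ok in *; simpl in *; intuition lra.
Qed.

Lemma ei_above a b x : EI a b x -> exists u, EI a b u /\ x < u.
Proof.
  intro H. destruct b as [b'|]; [exists ((b'+x)/2) | exists (x+1)];
  destruct a; unfold ext_open_interval, lower_ok, upper_ok in *; simpl in *; intuition lra.
Qed.

Lemma fixpt (F : R -> R) c z : c < z ->
  (forall x y, c <= x -> x <= y -> y <= z -> F x <= F y) ->
  c < F c -> F z < z -> exists w, c <= w <= z /\ F w = w.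
Proof.
  intros Hcz Hmon Hc Hz.
  destruct (completeness (fun x => (c <= x <= z) /\ x < F x)) as [w [Hub Hlub]].
  { exists z; intros x [[? ?] ?]; lra. }
  { exists c; split; [lra|exact Hc]. }
  assert (Hcw : c <= w) by (apply Hub; split; [lra|exact Hc]).
  assert (Hwz : w <= z) by (apply Hlub; intros x [[? ?] ?]; lra).
  exists w; split; [lra|].
  destruct (Rtotal_order (F w) w) as [Hlt|[Heq|Hgt]]; [|exact Heq|].
  - exfalso.
    assert (Hex: exists s, ((c <= s <= z) /\ s < F s) /\ F w < s).
    { apply NNPP; intro Hno. assert (w <= F w); [|lra].
      apply Hlub. intros s Hs. apply Rnot_lt_le. intro. apply Hno. exists s; auto. }
    destruct Hex as [s [Hs Hs4]].
    assert (s <= w) by (apply Hub; exact Hs).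
    destruct Hs as [[Hs1 Hs2] Hs3].
    assert (F s <= F w) by (apply Hmon; lra).
    lra.
  - exfalso.
    assert (Hwz' : w < z).
    { destruct (Rle_lt_or_eq_dec w z Hwz) as [?|e]; auto. rewrite e in Hgt. lra. }
    assert (Hx1 : w < Rmin z ((w + F w)/2)) by (apply Rmin_glb_lt; lra).
    assert (Hx2 : Rmin z ((w + F w)/2) <= z) by (apply Rmin_l).
    assert (Hx3 : Rmin z ((w + F w)/2) <= (w + F w)/2) by (apply Rmin_r).
    assert (F w <= F (Rmin z ((w + F w)/2))) by (apply Hmon; lra).
    assert (Rmin z ((w + F w)/2) <= w) by (apply Hub; split; [lra|lra]).
    lra.
Qed.

Lemma nocross P Q I F c z :
  (forall x, ~ (P x /\ Q x)) -> (forall x, P x \/ Q x) ->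
  (forall x y t, I x -> I y -> x <= t -> t <= y -> I t) ->
  SW P Q I F -> I c -> I z -> c < z -> c < F c -> F z < z -> False.
Proof.
  intros disj cov conv [HI [Hm [HPQ HQP]]] Ic Iz Hcz Hc Hz.
  destruct (fixpt F c z Hcz) as [w [[H1 H2] Hw]]; auto.
  - intros x y H1 H2 H3. destruct (Rle_lt_or_eq_dec x y H2) as [Hlt| ->]; [|lra].
    left; apply Hm; auto; apply (conv c z); auto; lra.
  - assert (Iw : I w) by (apply (conv c z); auto).
    destruct (cov w) as [Pw|Qw].
    + apply (disj w); split; auto. rewrite <- Hw; auto.
    + apply (disj w); split; auto. rewrite <- Hw; auto.
Qed.
Lemma sw_neq P Q I F x : (forall x, ~ (P x /\ Q x)) -> (forall x, P x \/ Q x) ->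
  SW P Q I F -> I x -> F x <> x.
Proof.
  intros disj cov [_ [_ [H1 H2]]] Ix E. destruct (cov x) as [Px|Qx].
  - apply (disj x); split; auto. rewrite <- E; auto.
  - apply (disj x); split; auto. rewrite <- E; auto.
Qed.

Lemma ext_lemma (P Q : R -> Prop) (a b : option R)
  (disj : forall x, ~ (P x /\ Q x)) (cov : forall x, P x \/ Q x) (dP : dens P)
  (f : {x | P x /\ EI a b x} -> {y | Q y /\ EI a b y})
  (g : {y | Q y /\ EI a b y} -> {x | P x /\ EI a b x})
  (gf : forall x, g (f x) = x) (fg : forall y, f (g y) = y)
  (fiff : forall x1 x2, proj1_sig x1 < proj1_sig x2 <-> proj1_sig (f x1) < proj1_sig (f x2)) :
  exists F : R -> R, SW P Q (EI a b) F /\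
    (forall x, F (proj1_sig x) = proj1_sig (f x)) /\
    (forall y, EI a b y -> Q y -> exists t, EI a b t /\ F t = y).
Proof.
  assert (dPI : forall u v, EI a b u -> EI a b v -> u < v ->
     exists p : {x | P x /\ EI a b x}, u < proj1_sig p /\ proj1_sig p < v).
  { intros u v Hu Hv Huv. destruct (dP u v Huv) as [p [Pp [H1 H2]]].
    assert (Ip : EI a b p) by (apply (ei_conv a b u v); auto; lra).
    exists (exist _ p (conj Pp Ip)); simpl; lra. }
  set (E := fun x v => exists a' : {x | P x /\ EI a b x}, proj1_sig a' < x /\ v = proj1_sig (f a')).
  assert (Hs : forall x, exists y, (forall h : P x /\ EI a b x, y = proj1_sig (f (exist _ x h))) /\
                               (Q x -> EI a b x -> is_lub (E x) y)).
  { intro x. destruct (classic (P x /\ EI a b x)) as [h|nh].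
    - exists (proj1_sig (f (exist _ x h))). split.
      + intro h'. rewrite (proof_irrelevance _ h h'). reflexivity.
      + intros Qx _. exfalso. apply (disj x). tauto.
    - destruct (classic (Q x /\ EI a b x)) as [[Qx Ix]|nq].
      + destruct (ei_below a b x Ix) as [u [Iu Hu]].
        destruct (ei_above a b x Ix) as [v [Iv Hv]].
        destruct (dPI u x Iu Ix Hu) as [plo [Hlo1 Hlo2]].
        destruct (dPI x v Ix Iv Hv) as [phi [Hhi1 Hhi2]].
        destruct (completeness (E x)) as [m Hm].
        * exists (proj1_sig (f phi)). intros w [a' [Ha' ->]].
          left. apply fiff. lra.
        * exists (proj1_sig (f plo)). exists plo. split; [lra|reflexivity].
        * exists m. split; [intro h; exfalso; tauto|]. intros; exact Hm.
      + exists 0. split; [intro h; exfalso; tauto|]. intros; exfalso; tauto. }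
  set (F := fun x => proj1_sig (constructive_indefinite_description _ (Hs x))).
  assert (HF1 : forall x h, F x = proj1_sig (f (exist _ x h))).
  { intros x h. unfold F. destruct (constructive_indefinite_description _ (Hs x)) as [y [H1 H2]].
    simpl. apply H1. }
  assert (HF2 : forall x, Q x -> EI a b x -> is_lub (E x) (F x)).
  { intros x. unfold F. destruct (constructive_indefinite_description _ (Hs x)) as [y [H1 H2]].
    simpl. apply H2. }
  clearbody F.
  assert (HF1' : forall a0, F (proj1_sig a0) = proj1_sig (f a0)).
  { intros [x h]. simpl. apply HF1. }
  assert (Hup : forall x a0, Q x -> EI a b x -> proj1_sig a0 < x -> proj1_sig (f a0) <= F x).
  { intros x a0 Qx Ix H. destruct (HF2 x Qx Ix) as [Hub _]. apply Hub. exists a0; split; auto. }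
  assert (Hlow : forall x a0, Q x -> EI a b x -> x < proj1_sig a0 -> F x <= proj1_sig (f a0)).
  { intros x a0 Qx Ix H. destruct (HF2 x Qx Ix) as [_ Hlub]. apply Hlub.
    intros w [a' [Ha' ->]]. left. apply fiff. lra. }
  assert (HQ : forall x, Q x -> EI a b x -> EI a b (F x) /\ P (F x)).
  { intros x Qx Ix.
    destruct (ei_below a b x Ix) as [u [Iu Hu]].
    destruct (ei_above a b x Ix) as [v [Iv Hv]].
    destruct (dPI u x Iu Ix Hu) as [plo [Hlo1 Hlo2]].
    destruct (dPI x v Ix Iv Hv) as [phi [Hhi1 Hhi2]].
    assert (IF : EI a b (F x)).
    { apply (ei_conv a b (proj1_sig (f plo)) (proj1_sig (f phi))).
      - exact (proj2 (proj2_sig (f plo))).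
      - exact (proj2 (proj2_sig (f phi))).
      - apply Hup; auto.
      - apply Hlow; auto. }
    split; auto.
    destruct (cov (F x)) as [|QF]; auto. exfalso.
    pose (bq := exist (fun y => Q y /\ EI a b y) (F x) (conj QF IF)).
    assert (E0 : proj1_sig (f (g bq)) = F x) by (rewrite fg; reflexivity).
    destruct (Rtotal_order (proj1_sig (g bq)) x) as [Hl|[He|Hg]].
    - destruct (dPI (proj1_sig (g bq)) x (proj2 (proj2_sig (g bq))) Ix Hl) as [p [Hp1 Hp2]].
      assert (proj1_sig (f (g bq)) < proj1_sig (f p)) by (apply fiff; exact Hp1).
      assert (proj1_sig (f p) <= F x) by (apply Hup; auto). lra.
    - apply (disj x). split; auto. rewrite <- He. exact (proj1 (proj2_sig (g bq))).
    - destruct (dPI x (proj1_sig (g bq)) Ix (proj2 (proj2_sig (g bq))) Hg) as [p [Hp1 Hp2]].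
      assert (proj1_sig (f p) < proj1_sig (f (g bq))) by (apply fiff; exact Hp2).
      assert (F x <= proj1_sig (f p)) by (apply Hlow; auto). lra. }
  assert (HP : forall x, P x -> EI a b x -> EI a b (F x) /\ Q (F x)).
  { intros x Px Ix. rewrite (HF1 x (conj Px Ix)).
    destruct (proj2_sig (f (exist _ x (conj Px Ix)))) as [H1 H2]. auto. }
  assert (mixed1 : forall x y, P x -> Q y -> EI a b x -> EI a b y -> x < y -> F x < F y).
  { intros x y Px Qy Ix Iy Hxy.
    destruct (dPI x y Ix Iy Hxy) as [p [Hp1 Hp2]].
    rewrite (HF1 x (conj Px Ix)).
    assert (proj1_sig (f (exist _ x (conj Px Ix))) < proj1_sig (f p)) by (apply fiff; simpl; lra).
    assert (proj1_sig (f p) <= F y) by (apply Hup; auto). lra. }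
  assert (mixed2 : forall x y, Q x -> P y -> EI a b x -> EI a b y -> x < y -> F x < F y).
  { intros x y Qx Py Ix Iy Hxy.
    assert (H1 : F x <= proj1_sig (f (exist _ y (conj Py Iy)))) by (apply Hlow; simpl; auto).
    rewrite <- (HF1 y (conj Py Iy)) in H1.
    destruct H1 as [H1|H1]; auto. exfalso.
    apply (disj (F x)). split; [apply HQ; auto|]. rewrite H1. apply HP; auto. }
  exists F. split; [|split].
  - split; [|split; [|split]].
    + intros x Ix. destruct (cov x) as [Px|Qx]; [apply HP|apply HQ]; auto.
    + intros x y Ix Iy Hxy. destruct (cov x) as [Px|Qx]; destruct (cov y) as [Py|Qy].
      * rewrite (HF1 x (conj Px Ix)), (HF1 y (conj Py Iy)). apply fiff. simpl. exact Hxy.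
      * apply mixed1; auto.
      * apply mixed2; auto.
      * destruct (dPI x y Ix Iy Hxy) as [p [Hp1 Hp2]].
        destruct (proj2_sig p) as [Pp Ip].
        apply Rlt_trans with (F (proj1_sig p)); [apply mixed2|apply mixed1]; auto.
    + intros x Ix Px. apply HP; auto.
    + intros x Ix Qx. apply HQ; auto.
  - exact HF1'.
  - intros y Iy Qy. pose (by' := exist (fun y => Q y /\ EI a b y) y (conj Qy Iy)).
    exists (proj1_sig (g by')). split; [exact (proj2 (proj2_sig (g by')))|].
    rewrite HF1', fg. reflexivity.
Qed.
Lemma down (A B : R -> Prop) a b (disj : forall x, ~ (A x /\ B x)) (cov : forall x, A x \/ B x)
  (dA : dens A) (dB : dens B)
  (iso : order_isomorphic (fun x => A x /\ EI a b x) (fun x => B x /\ EI a b x)) :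
  exists M, SW A B (EI a b) M /\ (forall y, EI a b y -> M y < y) /\
    (forall u v, u < v -> EI a b u -> EI a b v -> exists t, EI a b t /\ u < M t /\ M t < v).
Proof.
  destruct iso as [f [g [gf [fg fiff]]]].
  assert (giff : forall y1 y2, proj1_sig y1 < proj1_sig y2 <-> proj1_sig (g y1) < proj1_sig (g y2)).
  { intros y1 y2. rewrite (fiff (g y1) (g y2)), !fg. tauto. }
  assert (disj' : forall x, ~ (B x /\ A x)) by (intros x [? ?]; apply (disj x); auto).
  assert (cov' : forall x, B x \/ A x) by (intro x; destruct (cov x); auto).
  destruct (ext_lemma A B a b disj cov dA f g gf fg fiff) as [F [SWF [F1 Fhit]]].
  destruct (ext_lemma B A a b disj' cov' dB g f fg gf giff) as [F' [SWF' [F1' Fhit']]].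
  destruct (classic (forall y, EI a b y -> F y < y)) as [Hd|Hnd].
  { exists F; split; auto; split; auto. intros u v Huv Iu Iv.
    destruct (dB u v Huv) as [y [By [H1 H2]]].
    assert (Iy : EI a b y) by (apply (ei_conv a b u v); auto; lra).
    destruct (Fhit y Iy By) as [t [It Ht]]. exists t; rewrite Ht; auto. }
  destruct (classic (forall y, EI a b y -> F' y < y)) as [Hd'|Hnd'].
  { exists F'; split; [apply SW_sym; exact SWF'|]. split; auto. intros u v Huv Iu Iv.
    destruct (dA u v Huv) as [y [Ay [H1 H2]]].
    assert (Iy : EI a b y) by (apply (ei_conv a b u v); auto; lra).
    destruct (Fhit' y Iy Ay) as [t [It Ht]]. exists t; rewrite Ht; auto. }
  exfalso.
  apply not_all_ex_not in Hnd as [y0 Hy0]. apply imply_to_and in Hy0 as [Iy0 Hy0].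
  apply not_all_ex_not in Hnd' as [y1 Hy1]. apply imply_to_and in Hy1 as [Iy1 Hy1].
  pose proof (sw_neq A B _ F y0 disj cov SWF Iy0).
  pose proof (sw_neq B A _ F' y1 disj' cov' SWF' Iy1).
  assert (U0 : y0 < F y0) by (apply Rnot_lt_le in Hy0; destruct Hy0; [auto|congruence]).
  assert (U1 : y1 < F' y1) by (apply Rnot_lt_le in Hy1; destruct Hy1; [auto|congruence]).
  pose proof SWF as [FI [Fm _]]. pose proof SWF' as [FI' [Fm' _]].
  destruct (dA y0 (F y0) U0) as [p [Ap [Hp1 Hp2]]].
  assert (Ip : EI a b p) by (apply (ei_conv a b y0 (F y0)); auto; lra).
  destruct (dB y1 (F' y1) U1) as [q [Bq [Hq1 Hq2]]].
  assert (Iq : EI a b q) by (apply (ei_conv a b y1 (F' y1)); auto; lra).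
  assert (Fp : p < F p) by (assert (F y0 < F p) by (apply Fm; auto); lra).
  assert (Fq : q < F' q) by (assert (F' y1 < F' q) by (apply Fm'; auto); lra).
  pose (ap := exist (fun x => A x /\ EI a b x) p (conj Ap Ip)).
  pose (bq := exist (fun x => B x /\ EI a b x) q (conj Bq Iq)).
  assert (E1 : F (proj1_sig (g bq)) = q) by (rewrite F1, fg; reflexivity).
  assert (E2 : F' q = proj1_sig (g bq)) by (apply (F1' bq)).
  assert (E3 : F p = proj1_sig (f ap)) by (apply (F1 ap)).
  assert (E4 : F' (proj1_sig (f ap)) = p) by (rewrite F1', gf; reflexivity).
  assert (Ip' : EI a b (proj1_sig (g bq))) by exact (proj2 (proj2_sig (g bq))).
  assert (Iq' : EI a b (proj1_sig (f ap))) by exact (proj2 (proj2_sig (f ap))).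
  destruct (Rtotal_order p (proj1_sig (g bq))) as [Hl|[He|Hg]].
  - apply (nocross A B (EI a b) F p (proj1_sig (g bq)) disj cov (ei_conv a b)); auto.
    rewrite E1. lra.
  - rewrite <- He in E1. lra.
  - assert (Hqq : F (proj1_sig (g bq)) < F p) by (apply Fm; auto).
    rewrite E1, E3 in Hqq.
    apply (nocross B A (EI a b) F' q (proj1_sig (f ap)) disj' cov' (ei_conv a b)); auto.
    rewrite E4, <- E3. lra.
Qed.
Lemma upat (A B : R -> Prop) a b (disj : forall x, ~ (A x /\ B x)) (cov : forall x, A x \/ B x)
  (dA : dens A) (dB : dens B)
  (iso : order_isomorphic (fun x => A x /\ EI a b x) (fun x => B x /\ EI a b x))
  x0 (Ax0 : A x0) (Ix0 : EI a b x0) :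
  exists H c, SW A B (EI a b) H /\ EI a b c /\ c < H c.
Proof.
  destruct iso as [f [g [gf [fg fiff]]]].
  assert (giff : forall y1 y2, proj1_sig y1 < proj1_sig y2 <-> proj1_sig (g y1) < proj1_sig (g y2)).
  { intros y1 y2. rewrite (fiff (g y1) (g y2)), !fg. tauto. }
  assert (disj' : forall x, ~ (B x /\ A x)) by (intros x [? ?]; apply (disj x); auto).
  assert (cov' : forall x, B x \/ A x) by (intro x; destruct (cov x); auto).
  destruct (ext_lemma A B a b disj cov dA f g gf fg fiff) as [F [SWF [F1 Fhit]]].
  destruct (ext_lemma B A a b disj' cov' dB g f fg gf giff) as [F' [SWF' [F1' Fhit']]].
  pose proof (sw_neq A B _ F x0 disj cov SWF Ix0) as Hne.
  pose (ac := exist (fun x => A x /\ EI a b x) x0 (conj Ax0 Ix0)).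
  destruct (Rtotal_order x0 (F x0)) as [Hl|[He|Hg]].
  - exists F, x0; auto.
  - congruence.
  - exists F', (F x0). split; [apply SW_sym; auto|]. split.
    + destruct SWF as [FI _]. auto.
    + assert (E : F x0 = proj1_sig (f ac)) by (apply (F1 ac)).
      rewrite E, F1', gf. simpl. rewrite <- E. exact Hg.
Qed.

Lemma iter_down (M : R -> R) d :
  (forall y, d < y -> d < M y) ->
  (forall x y, d < x -> x < y -> M x < M y) ->
  (forall y, d < y -> M y < y) ->
  (forall u v, u < v -> d < u -> exists t, d < t /\ u < M t /\ M t < v) ->
  forall z y0, d < z -> exists n, Nat.iter n (fun y => M (M y)) y0 < z.
Proof.
  intros Hin Hmon Hdn Hhit z y0 Hz.
  apply NNPP; intro Hno.
  set (a := fun n => Nat.iter n (fun y => M (M y)) y0).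
  assert (Hge : forall n, z <= a n).
  { intro n. apply Rnot_lt_le. intro Hlt. apply Hno. exists n. exact Hlt. }
  destruct (completeness (fun v => exists n, v = - a n)) as [m [Hub Hlub]].
  { exists (- z). intros v [n ->]. specialize (Hge n). lra. }
  { exists (- a 0%nat). exists 0%nat. reflexivity. }
  assert (HL : forall n, - m <= a n).
  { intro n. assert (- a n <= m) by (apply Hub; exists n; reflexivity). lra. }
  assert (Hmz : m <= - z). { apply Hlub. intros v [n ->]. specialize (Hge n). lra. }
  assert (dL : d < - m) by lra.
  destruct (Hhit (M (- m)) (- m) (Hdn _ dL) (Hin _ dL)) as [t [dt [Ht1 Ht2]]].
  assert (HtL : - m < t).
  { destruct (Rtotal_order t (- m)) as [Hlt|[Heq|Hgt]]; auto.
    - assert (M t < M (- m)) by (apply Hmon; lra). lra.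
    - rewrite Heq in Ht1. lra. }
  assert (Hex : exists n, a n < t).
  { apply NNPP; intro Hn. assert (m <= - t); [|lra].
    apply Hlub. intros v [n ->].
    assert (t <= a n) by (apply Rnot_lt_le; intro; apply Hn; exists n; auto). lra. }
  destruct Hex as [n Hnz].
  assert (Han : d < a n) by (specialize (Hge n); lra).
  assert (H1 : M (a n) < M t) by (apply Hmon; lra).
  assert (H2 : d < M (a n)) by (apply Hin; lra).
  assert (H3 : M (M (a n)) < M (a n)) by (apply Hdn; lra).
  assert (E : a (S n) = M (M (a n))) by reflexivity.
  specialize (HL (S n)). lra.
Qed.

Lemma iter_props (A B : R -> Prop) (M : R -> R) d :
  (forall y, d < y -> d < M y) ->
  (forall x y, d < x -> x < y -> M x < M y) ->
  (forall y, d < y -> A y -> B (M y)) -> (forall y, d < y -> B y -> A (M y)) ->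
  forall n y, d < y -> d < Nat.iter n (fun y => M (M y)) y /\
     (A y -> A (Nat.iter n (fun y => M (M y)) y)) /\ (B y -> B (Nat.iter n (fun y => M (M y)) y)) /\
     (forall y', y <= y' -> Nat.iter n (fun y => M (M y)) y <= Nat.iter n (fun y => M (M y)) y').
Proof.
  intros Hin Hmon HAB HBA.
  assert (Mw : forall u v, d < u -> u <= v -> M u <= M v).
  { intros u v Hu Huv. destruct (Rle_lt_or_eq_dec u v Huv) as [Hl| ->]; [left; apply Hmon; auto|lra]. }
  induction n as [|n IH]; intros y Hy.
  - simpl. repeat split; auto; intros; lra.
  - simpl. destruct (IH y Hy) as [H1 [H2 [H3 H4]]].
    set (u := Nat.iter n (fun y => M (M y)) y) in *.
    repeat split.
    + apply Hin, Hin; auto.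
    + intro Ay. apply HBA; [apply Hin; auto|]. apply HAB; auto.
    + intro By. apply HAB; [apply Hin; auto|]. apply HBA; auto.
    + intros y' Hy'. specialize (H4 y' Hy').
      apply Mw; [apply Hin; auto|]. apply Mw; auto.
Qed.

Theorem theorem1 (A B : R -> Prop) :
  (forall x, A x \/ B x) -> (forall x, ~ (A x /\ B x)) ->
  exists a b : option R, ext_lt a b /\
    ~ order_isomorphic (fun x => A x /\ ext_open_interval a b x)
                       (fun x => B x /\ ext_open_interval a b x).
Proof.
  intros cov disj.
  apply NNPP; intro Hn.
  assert (iso : forall a b, ext_lt a b -> order_isomorphic (fun x => A x /\ EI a b x) (fun x => B x /\ EI a b x)).
  { intros a b Hab. apply NNPP; intro Hni. apply Hn. exists a, b. auto. }
  assert (dAB : forall u v, u < v -> (exists x, A x /\ u < x /\ x < v) /\ (exists x, B x /\ u < x /\ x < v)).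
  { intros u v Huv. destruct (iso (Some u) (Some v) Huv) as [f [g [gf [fg fiff]]]].
    assert (Im : EI (Some u) (Some v) ((u+v)/2)) by (split; simpl; lra).
    destruct (cov ((u+v)/2)) as [Am|Bm].
    - split; [exists ((u+v)/2); split; [exact Am|lra]|].
      destruct (proj2_sig (f (exist _ ((u+v)/2) (conj Am Im)))) as [Hb [H1 H2]].
      exists (proj1_sig (f (exist _ ((u+v)/2) (conj Am Im)))). simpl in H1, H2. auto.
    - split; [|exists ((u+v)/2); split; [exact Bm|lra]].
      destruct (proj2_sig (g (exist _ ((u+v)/2) (conj Bm Im)))) as [Hb [H1 H2]].
      exists (proj1_sig (g (exist _ ((u+v)/2) (conj Bm Im)))). simpl in H1, H2. auto. }
  assert (dA : dens A) by (intros u v H; exact (proj1 (dAB u v H))).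
  assert (dB : dens B) by (intros u v H; exact (proj2 (dAB u v H))).
  destruct (dA 0 1 ltac:(lra)) as [x0 [Ax0 _]].
  destruct (upat A B None None disj cov dA dB (iso None None I) x0 Ax0 (conj I I))
    as [H [c0 [[_ [Hm [HAB HBA]]] [_ Hc0]]]].
  assert (Hm' : forall x y, x < y -> H x < H y) by (intros; apply Hm; [split; exact I|split; exact I|auto]).
  assert (HAB' : forall x, A x -> B (H x)) by (intros; apply HAB; [split; exact I|auto]).
  assert (HBA' : forall x, B x -> A (H x)) by (intros; apply HBA; [split; exact I|auto]).
  clear Hm HAB HBA.
  set (d := H c0) in *.
  destruct (down A B (Some d) None disj cov dA dB (iso (Some d) None I))
    as [M [[MI [Mm [MAB MBA]]] [Mdn Mhit]]].
  assert (EId : forall y, d < y -> EI (Some d) None y) by (intros; split; simpl; auto).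
  assert (Min : forall y, d < y -> d < M y) by (intros y Hy; exact (proj1 (MI y (EId y Hy)))).
  assert (Mm' : forall x y, d < x -> x < y -> M x < M y) by (intros; apply Mm; auto; apply EId; lra).
  assert (MAB' : forall y, d < y -> A y -> B (M y)) by auto.
  assert (MBA' : forall y, d < y -> B y -> A (M y)) by auto.
  assert (Mdn' : forall y, d < y -> M y < y) by auto.
  assert (Mhit' : forall u v, u < v -> d < u -> exists t, d < t /\ u < M t /\ M t < v).
  { intros u v Huv Hu. destruct (Mhit u v Huv (EId u Hu) (EId v ltac:(lra))) as [t [It Ht]].
    exists t. split; auto. exact (proj1 It). }
  assert (Hz : d < d + 1) by lra.
  destruct (iter_down M d Min Mm' Mdn' Mhit' (d+1) (H (d+1)) Hz) as [n Hnz].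
  pose proof (iter_props A B M d Min Mm' MAB' MBA' n) as IP.
  assert (Hcz : c0 < d + 1) by lra.
  assert (Hdz : d < H (d+1)) by (apply Hm'; lra).
  destruct (fixpt (fun x => if Rle_dec x c0 then H x else Nat.iter n (fun y => M (M y)) (H x)) c0 (d+1) Hcz)
    as [w [[Hw1 Hw2] Hw]].
  - intros x y H1 H2 H3. destruct (Rle_dec x c0) as [Hx|Hx]; destruct (Rle_dec y c0) as [Hy|Hy].
    + replace x with y by lra. lra.
    + replace x with c0 by lra. fold d.
      assert (d < H y) by (apply Hm'; lra). destruct (IP (H y) H0) as [? _]. lra.
    + lra.
    + assert (d < H x) by (apply Hm'; lra).
      assert (H x <= H y).
      { destruct (Rle_lt_or_eq_dec x y H2) as [Hl| ->]; [left; apply Hm'; auto| lra]. }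
      destruct (IP (H x) H0) as [_ [_ [_ H5]]]. apply H5; auto.
  - destruct (Rle_dec c0 c0) as [_|nn]; [exact Hc0|lra].
  - destruct (Rle_dec (d+1) c0) as [Hl|_]; [lra|exact Hnz].
  - destruct (Rle_dec w c0) as [Hl|Hg].
    + destruct (cov w) as [Aw|Bw].
      * apply (disj w); split; auto. rewrite <- Hw. auto.
      * apply (disj w); split; auto. rewrite <- Hw. auto.
    + assert (Hd : d < H w) by (apply Hm'; lra).
      destruct (IP (H w) Hd) as [_ [IA [IB _]]].
      destruct (cov w) as [Aw|Bw].
      * apply (disj w); split; auto. rewrite <- Hw. apply IB. auto.
      * apply (disj w); split; auto. rewrite <- Hw. apply IA. auto.
Qed.
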